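(* Let $D$ be a discrete semigroup such that for some $c\in D$ the set $D_c=\{(x,y)\in D\times D:xy=c\}$ is infinite, and let $\pi:D\to M$ be a homomorphism into a Hausdorff topological semigroup $M$. If $S=D\cup_\pi M$ is a topological semigroup, then $D_c$ is an open-and-closed discrete subspace of $S\times S$, and consequently $S\times S$ is not pseudocompact.
   Context: For a discrete space $D$: if $D$ is infinite, $\alpha D=D\cup\{\infty\}$ is its one-point compactification; if $D$ is finite, $\alpha D$ is the topological sum of $D$ and an isolated point $\infty\notin D$. For a map $\pi:D\to M$, $D\cup_\pi M$ is the subspace $\{(x,\pi(x)):x\in D\}\cup(\{\infty\}\times M)$ of $\alpha D\times M$, with $D$ identified with $\{(x,\pi(x))\}$ and $M$ with $\{\infty\}\times M$. It carries the semigroup operation extending those of $D$ and $M$ by $xy=\pi(x)y$ for $x\in D,y\in M$ and $xy=x\pi(y)$ for $x\in M,y\in D$. A space is pseudocompact if every locally finite open cover is finite. *)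

(* Defs.v *)
From Stdlib Require Import List.
Set Implicit Arguments.

Definition topology (X : Type) := (X -> Prop) -> Prop.

Definition is_topology (X : Type) (op : topology X) : Prop :=
  op (fun _ => True) /\
  (forall U V, op U -> op V -> op (fun x => U x /\ V x)) /\
  (forall F : (X -> Prop) -> Prop, (forall U, F U -> op U) ->
      op (fun x => exists U, F U /\ U x)).

Definition closed (X : Type) (op : topology X) (A : X -> Prop) : Prop :=
  op (fun x => ~ A x).

Definition clopen (X : Type) (op : topology X) (A : X -> Prop) : Prop :=
  op A /\ closed op A.

Definition finite_set (X : Type) (A : X -> Prop) : Prop :=
  exists l : list X, forall x, A x -> In x l.

Definition prod_top (X Y : Type) (oX : topology X) (oY : topology Y)
  : topology (X * Y) :=
  fun W => forall p, W p -> exists U V, oX U /\ oY V /\ U (fst p) /\ V (snd p) /\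
      (forall q, U (fst q) -> V (snd q) -> W q).

Definition continuous (X Y : Type) (oX : topology X) (oY : topology Y)
  (f : X -> Y) : Prop :=
  forall V, oY V -> oX (fun x => V (f x)).

Definition hausdorff (X : Type) (op : topology X) : Prop :=
  forall x y, x <> y -> exists U V, op U /\ op V /\ U x /\ V y /\
      (forall z, U z -> V z -> False).

Definition associative_op (X : Type) (m : X -> X -> X) : Prop :=
  forall x y z, m x (m y z) = m (m x y) z.

Definition topological_semigroup (X : Type) (op : topology X) (m : X -> X -> X)
  : Prop :=
  associative_op m /\
  continuous (prod_top op op) op (fun p => m (fst p) (snd p)).

Definition discrete_subspace (X : Type) (op : topology X) (A : X -> Prop) : Prop :=
  forall p, A p -> exists W, op W /\ W p /\ (forall q, A q -> W q -> q = p).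

(** Pseudocompactness: every locally finite open cover is finite.
    A cover is a collection of subsets; finiteness of collections is taken
    up to extensional equality of subsets. *)
Definition ext_eq (X : Type) (U V : X -> Prop) : Prop := forall x, U x <-> V x.

Definition finite_family (X : Type) (C : (X -> Prop) -> Prop) : Prop :=
  exists l : list (X -> Prop), forall U, C U -> exists V, In V l /\ ext_eq U V.

Definition open_cover (X : Type) (op : topology X) (C : (X -> Prop) -> Prop) : Prop :=
  (forall U, C U -> op U) /\ (forall x, exists U, C U /\ U x).

Definition locally_finite (X : Type) (op : topology X) (C : (X -> Prop) -> Prop)
  : Prop :=
  forall x, exists N, op N /\ N x /\
    finite_family (fun U => C U /\ exists y, N y /\ U y).

Definition pseudocompact (X : Type) (op : topology X) : Prop :=
  forall C, open_cover op C -> locally_finite op C -> finite_family C.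

(** alpha D, carried by option D with None = infinity.  For infinite D this is the
    one-point compactification of discrete D; for finite D every set is open,
    i.e. the topological sum of D and an isolated point. *)
Definition alpha_top (D : Type) : topology (option D) :=
  fun U => U None -> finite_set (fun x : D => ~ U (Some x)).

(** D \cup_pi M, carried by D + M, embedded in alpha D x M by
    inl x |-> (x, pi x), inr m |-> (infinity, m); subspace topology. *)
Definition union_embed (D M : Type) (pi : D -> M) (s : D + M) : option D * M :=
  match s with
  | inl x => (Some x, pi x)
  | inr m => (None, m)
  end.

Definition union_top (D M : Type) (pi : D -> M) (oM : topology M)
  : topology (D + M) :=
  fun U => exists V, prod_top (@alpha_top D) oM V /\
             (forall s, U s <-> V (union_embed pi s)).

Definition union_mul (D M : Type) (mD : D -> D -> D) (mM : M -> M -> M)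
  (pi : D -> M) (s t : D + M) : D + M :=
  match s, t with
  | inl x, inl y => inl (mD x y)
  | inl x, inr y => inr (mM (pi x) y)
  | inr x, inl y => inr (mM x (pi y))
  | inr x, inr y => inr (mM x y)
  end.

Definition Dc_set (D M : Type) (mD : D -> D -> D) (c : D) (p : (D + M) * (D + M))
  : Prop :=
  exists x y, p = (inl x, inl y) /\ mD x y = c.

(* Main.v *)
Require Import Defs.
From Stdlib Require Import List Classical.

Lemma prod_top_ext (X Y : Type) (oX : topology X) (oY : topology Y) (W W' : X * Y -> Prop) :
  prod_top oX oY W -> (forall p, W' p <-> W p) -> prod_top oX oY W'.
Proof.
  intros H E p Hp. apply E in Hp. destruct (H p Hp) as [U [V [h1 [h2 [h3 [h4 h5]]]]]].
  exists U, V. repeat split; auto. intros q a b. apply E. auto.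
Qed.

Lemma prod_rect (X Y : Type) (oX : topology X) (oY : topology Y) A B :
  oX A -> oY B -> prod_top oX oY (fun q => A (fst q) /\ B (snd q)).
Proof.
  intros HA HB p [h1 h2]. exists A, B. repeat split; auto.
Qed.

Lemma extract (X Y : Type) (f : X -> (Y -> Prop))
  (inj : forall x x' V, ext_eq (f x) V -> ext_eq (f x') V -> x = x')
  (l : list (Y -> Prop)) :
  exists L, forall x, (exists V, In V l /\ ext_eq (f x) V) -> In x L.
Proof.
  induction l as [|V l IH].
  - exists nil. intros x [V [[] _]].
  - destruct IH as [L HL].
    destruct (classic (exists x, ext_eq (f x) V)) as [[x0 Hx0]|Hn].
    + exists (x0 :: L). intros x [V' [[<-|Hin] He]].
      * left. symmetry. eapply inj; eauto.
      * right. apply HL. eauto.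
    + exists L. intros x [V' [[<-|Hin] He]].
      * exfalso. apply Hn. eauto.
      * apply HL. eauto.
Qed.

Theorem corollary3p3
  (D : Type) (mD : D -> D -> D) (assocD : associative_op mD)
  (M : Type) (oM : topology M) (mM : M -> M -> M)
  (topM : is_topology oM) (hausM : hausdorff oM)
  (tsM : topological_semigroup oM mM)
  (pi : D -> M) (hom : forall x y, pi (mD x y) = mM (pi x) (pi y))
  (c : D) (Dc_inf : ~ finite_set (fun p : D * D => mD (fst p) (snd p) = c))
  (tsS : topological_semigroup (union_top pi oM) (union_mul mD mM pi)) :
  clopen (prod_top (union_top pi oM) (union_top pi oM)) (@Dc_set D M mD c) /\
  discrete_subspace (prod_top (union_top pi oM) (union_top pi oM)) (@Dc_set D M mD c) /\
  ~ pseudocompact (prod_top (union_top pi oM) (union_top pi oM)).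
Proof.
  destruct tsS as [_ cont].
  destruct topM as [topT _].
  set (oS := union_top pi oM) in *.
  set (oP := prod_top oS oS).
  assert (open_inl : forall x, oS (fun s => s = inl x)).
  { intro x. exists (fun z : option D * M => fst z = Some x). split.
    - intros p Hp. exists (fun o => o = Some x), (fun _ => True).
      repeat split; auto.
      + intro H; discriminate.
    - intros [a|m]; simpl; split; intro H.
      + congruence.
      + congruence.
      + discriminate.
      + discriminate. }
  assert (open_ninl : oS (fun s => s <> inl c)).
  { exists (fun z : option D * M => fst z <> Some c). split.
    - intros p Hp. exists (fun o => o <> Some c), (fun _ => True).
      repeat split; auto.
      intros _. exists (c :: nil). intros x Hx. left.
      apply NNPP in Hx. congruence.
    - intros [a|m]; simpl; split; intros H E; apply H; congruence. }
  assert (key : forall p, union_mul mD mM pi (fst p) (snd p) = inl c <-> Dc_set mD c p).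
  { intros [[a|m] [b|n]]; simpl; split; intro H; try discriminate;
      try (destruct H as [x [y [E _]]]; discriminate).
    - exists a, b. split; auto. congruence.
    - destruct H as [x [y [E F]]]. inversion E; subst; reflexivity. }
  assert (Dc_open : oP (Dc_set mD c)).
  { eapply prod_top_ext. apply (cont _ (open_inl c)). intro p. rewrite key. tauto. }
  assert (Dc_closed : oP (fun p => ~ Dc_set mD c p)).
  { eapply prod_top_ext. apply (cont _ open_ninl). intro p. simpl. rewrite key. tauto. }
  set (single := fun (p : D * D) (q : (D + M) * (D + M)) => q = (inl (fst p), inl (snd p))).
  assert (single_open : forall p, oP (single p)).
  { intro p. eapply prod_top_ext.
    apply (@prod_rect _ _ oS oS _ _ (open_inl (fst p)) (open_inl (snd p))).
    intros [s t]; unfold single; simpl; split.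
    - intro E; inversion E; auto.
    - intros [-> ->]; auto. }
  assert (single_Dc : forall p, mD (fst p) (snd p) = c -> @Dc_set D M mD c (inl (fst p), inl (snd p))).
  { intros p Hp. exists (fst p), (snd p). auto. }
  split; [split; auto|split].
  - intros q Hq. destruct Hq as [x [y [E F]]].
    exists (single (x, y)). split; [apply single_open|]. split.
    + unfold single; simpl; auto.
    + intros q' _ Hq'. unfold single in Hq'; simpl in Hq'. congruence.
  - intro Hpc.
    set (C := fun U : (D + M) * (D + M) -> Prop =>
           U = (fun p => ~ Dc_set mD c p) \/
           exists p : D * D, mD (fst p) (snd p) = c /\ U = single p).
    assert (Hcov : open_cover oP C).
    { split.
      - intros U [->|[p [_ ->]]]; auto.
      - intro x. destruct (classic (Dc_set mD c x)) as [Hx|Hx].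
        + destruct Hx as [a [b [E F]]]. exists (single (a, b)). split.
          * right. exists (a, b). auto.
          * unfold single; simpl; auto.
        + exists (fun p => ~ Dc_set mD c p). split; auto. left; auto. }
    assert (Hlf : locally_finite oP C).
    { intro x. destruct (classic (Dc_set mD c x)) as [Hx|Hx].
      - destruct Hx as [a [b [E F]]]. exists (single (a, b)).
        split; [apply single_open|]. split; [unfold single; simpl; auto|].
        exists (single (a, b) :: nil). intros U [[->|[p [Hp ->]]] [y [Ny Uy]]].
        + exfalso. apply Uy. unfold single in Ny; simpl in Ny. subst y.
          exists a, b; auto.
        + exists (single (a, b)). split; [left; auto|].
          unfold single in Ny, Uy; simpl in Ny, Uy. rewrite Ny in Uy.
          inversion Uy. destruct p as [p1 p2]; simpl in *; subst.
          intro z; tauto.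
      - exists (fun p => ~ Dc_set mD c p). split; auto. split; auto.
        exists ((fun p => ~ Dc_set mD c p) :: nil).
        intros U [[->|[p [Hp ->]]] [y [Ny Uy]]].
        + exists (fun p => ~ Dc_set mD c p). split; [left; auto|]. intro z; tauto.
        + exfalso. apply Ny. unfold single in Uy. subst y. apply single_Dc; auto. }
    destruct (Hpc C Hcov Hlf) as [l Hl].
    assert (inj : forall x x' V, ext_eq (single x) V -> ext_eq (single x') V -> x = x').
    { intros [x1 x2] [y1 y2] V H1 H2.
      assert (V (inl x1, inl x2)) by (apply H1; unfold single; reflexivity).
      apply H2 in H. unfold single in H; simpl in H. inversion H; subst; auto. }
    destruct (@extract _ _ single inj l) as [L HL].
    apply Dc_inf. exists L. intros p Hp. apply HL.
    apply Hl. right. exists p. auto.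
Qed.
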